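(* Let $S$ be a category, $M=\mathrm{U_{mon}}(S)$, and $a\in S$. Then $\varepsilon_S(a)\leqslant_M 1$ iff $a\leqslant_S \mathrm{s}(a)$, and $\varepsilon_S(a)\mathbin{\widetilde\leqslant}_M 1$ iff $a\mathbin{\widetilde\leqslant}_S\mathrm{t}(a)$. Furthermore, for every $\boldsymbol{b}\in M\setminus\{1\}$: if $a$ is not right invertible in $S$, then $\varepsilon_S(a)\leqslant_M\boldsymbol{b}$ iff $a\leqslant_S\nabla_0(\boldsymbol{b})$; and if $a$ is not left invertible in $S$, then $\varepsilon_S(a)\mathbin{\widetilde\leqslant}_M\boldsymbol{b}$ iff $a\mathbin{\widetilde\leqslant}_S\nabla_1(\boldsymbol{b})$.
   Context: Categories are arrow-only: a set $S$ with partial associative multiplication, identities $\mathrm{Id}\,S$, source/target identities $\mathrm{s}(x),\mathrm{t}(x)$. $\mathrm{U_{mon}}(S)$ is the monoid presented by generators $\varepsilon_S(x)$ ($x\in S$) and relations $\varepsilon_S(e)=1$ ($e\in\mathrm{Id}\,S$), $\varepsilon_S(x)\varepsilon_S(y)=\varepsilon_S(xy)$ whenever $xy$ is defined. Every $\boldsymbol{b}\in\mathrm{U_{mon}}(S)$ can be written uniquely as $\varepsilon_S(b_1)\cdots\varepsilon_S(b_n)$ with each $b_i\notin\mathrm{Id}\,S$ and each product $b_ib_{i+1}$ undefined (the reduced sequence $(b_1,\dots,b_n)$ of $\boldsymbol b$); for $\boldsymbol b\ne1$ (i.e. $n>0$), set $\nabla_0(\boldsymbol{b})=b_1$ and $\nabla_1(\boldsymbol{b})=b_n$.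 In any category (or monoid) $C$, $a\leqslant_C b$ means $b=ax$ for some $x\in C$, and $a\mathbin{\widetilde\leqslant}_C b$ means $b=xa$ for some $x\in C$. $a$ is right (left) invertible if $ax$ (resp. $xa$) is an identity for some $x$. *)

(* Defs.v *)
From Stdlib Require Import List Relations.
Import ListNotations.
Unset Implicit Arguments.

(* An (arrow-only) category: partial multiplication [mul x y = Some (xy)]
   when xy is defined; composition is written left to right (x then y). *)
Record Category := {
  carrier :> Type;
  mul : carrier -> carrier -> option carrier;
  src : carrier -> carrier;
  tgt : carrier -> carrier;
  mul_s : forall x, mul (src x) x = Some x;
  mul_t : forall x, mul x (tgt x) = Some x;
  src_id : forall x y z, (mul (src x) y = Some z -> z = y) /\ (mul y (src x) = Some z -> z = y);
  tgt_id : forall x y z, (mul (tgt x) y = Some z -> z = y) /\ (mul y (tgt x) = Some z -> z = y);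
  defined_iff : forall x y, (exists z, mul x y = Some z) <-> tgt x = src y;
  src_mul : forall x y z, mul x y = Some z -> src z = src x;
  tgt_mul : forall x y z, mul x y = Some z -> tgt z = tgt y;
  mul_assoc : forall x y z xy yz, mul x y = Some xy -> mul y z = Some yz ->
                mul xy z = mul x yz
}.

Section Defs.
Variable S : Category.

Definition is_id (e : S) : Prop :=
  forall x y, (mul S e x = Some y -> y = x) /\ (mul S x e = Some y -> y = x).

Definition leS (a b : S) : Prop := exists x, mul S a x = Some b.
Definition leS_tilde (a b : S) : Prop := exists x, mul S x a = Some b.

Definition right_invertible (a : S) : Prop :=
  exists x e, mul S a x = Some e /\ is_id e.
Definition left_invertible (a : S) : Prop :=
  exists x e, mul S x a = Some e /\ is_id e.

(* U_mon(S): words over S (free monoid, product = ++, unit = []) modulo the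
   congruence generated by  [e] ~ []  (e identity) and [x;y] ~ [xy]. *)
Inductive ustep : list S -> list S -> Prop :=
  | ustep_id : forall u v e, is_id e -> ustep (u ++ e :: v) (u ++ v)
  | ustep_mul : forall u v x y z, mul S x y = Some z ->
      ustep (u ++ x :: y :: v) (u ++ z :: v).

Definition ueq : list S -> list S -> Prop := clos_refl_sym_trans _ ustep.

(* eps_S(x) is the class of [x]; 1 is the class of [] *)
Definition eps (x : S) : list S := [x].

Definition leM (u w : list S) : Prop := exists x, ueq (u ++ x) w.
Definition leM_tilde (u w : list S) : Prop := exists x, ueq (x ++ u) w.

Fixpoint reduced (r : list S) : Prop :=
  match r with
  | [] => True
  | x :: r' => ~ is_id x /\
               match r' with [] => True | y :: _ => mul S x y = None end /\
               reduced r'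
  end.

(* nabla_0 and nabla_1 of the element with nonempty reduced sequence b0 :: rest *)
Definition nabla0 (b0 : S) (rest : list S) : S := b0.
Definition nabla1 (b0 : S) (rest : list S) : S := last rest b0.
End Defs.
Arguments is_id {S} e.
Arguments leS {S} a b.
Arguments leS_tilde {S} a b.
Arguments right_invertible {S} a.
Arguments left_invertible {S} a.
Arguments ustep {S} _ _.
Arguments ueq {S} _ _.
Arguments eps {S} x.
Arguments leM {S} u w.
Arguments leM_tilde {S} u w.
Arguments reduced {S} r.
Arguments nabla0 {S} b0 rest.
Arguments nabla1 {S} b0 rest.

(* Main.v *)
Require Import Defs.
From Stdlib Require Import List Relations ClassicalEpsilon.
Import ListNotations.

Section NF.
Variable S : Category.

Definition isid_dec (e : S) := excluded_middle_informative (is_id e).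

Definition push (x : S) (r : list S) : list S :=
  if isid_dec x then r else
  match r with
  | [] => [x]
  | y :: r' => match mul S x y with
     | Some z => if isid_dec z then r' else z :: r'
     | None => x :: y :: r'
     end
  end.

Definition nf (u : list S) := fold_right push [] u.

Lemma id_src (e : S) : is_id e -> src S e = e.
Proof. intros H. destruct (H (src S e) e) as [_ H2]. symmetry; apply H2, mul_s. Qed.
Lemma id_tgt (e : S) : is_id e -> tgt S e = e.
Proof. intros H. destruct (H (tgt S e) e) as [H1 _]. symmetry; apply H1, mul_t. Qed.
Lemma src_is_id (x : S) : is_id (src S x).
Proof. intros y z. apply src_id. Qed.
Lemma tgt_is_id (x : S) : is_id (tgt S x).
Proof. intros y z. apply tgt_id. Qed.

Lemma def_tgt (x y z : S) : mul S x y = Some z -> tgt S x = src S y.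
Proof. intros H. apply defined_iff. eauto. Qed.

Lemma undef_tgt (y z w : S) : tgt S z = tgt S y -> mul S y w = None -> mul S z w = None.
Proof.
  intros E H. destruct (mul S z w) eqn:Hz; auto.
  assert (tgt S y = src S w) by (rewrite <- E; eapply def_tgt; eauto).
  apply defined_iff in H0. destruct H0 as [q Hq]. congruence.
Qed.

Lemma push_id x r : is_id x -> push x r = r.
Proof. intros H. unfold push. destruct (isid_dec x); tauto. Qed.

Lemma push_reduced x r : reduced r -> reduced (push x r).
Proof.
  intros Hr. unfold push. destruct (isid_dec x) as [|nx]; auto.
  destruct r as [|y r']. { simpl; tauto. }
  destruct (mul S x y) as [z|] eqn:Hxy.
  - simpl in Hr. destruct Hr as (ny & Hm & Hr').
    destruct (isid_dec z) as [|nz]; auto.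
    simpl. split; [auto|split; auto].
    destruct r' as [|w r'']; auto.
    eapply undef_tgt; [|exact Hm]. eapply tgt_mul; eauto.
  - simpl. split; auto.
Qed.

Lemma nf_reduced u : reduced (nf u).
Proof. induction u; simpl; auto. apply push_reduced; auto. Qed.

Lemma nf_red r : reduced r -> nf r = r.
Proof.
  induction r as [|x r IH]; auto. intros Hr. simpl.
  destruct Hr as (nx & Hm & Hr). rewrite IH by auto.
  unfold push. destruct (isid_dec x); [tauto|].
  destruct r as [|y r']; auto. rewrite Hm. auto.
Qed.

Lemma push_assoc x y z r : reduced r -> mul S x y = Some z ->
  push x (push y r) = push z r.
Proof.
  intros Hr Hxy.
  destruct (isid_dec x) as [ix|nx].
  { rewrite push_id by auto. destruct (ix y z) as [H _]. rewrite (H Hxy). auto. }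
  destruct (isid_dec y) as [iy|ny].
  { rewrite (push_id y) by auto. destruct (iy x z) as [_ H]. rewrite (H Hxy). auto. }
  destruct r as [|w r'].
  - unfold push at 2. destruct (isid_dec y); [tauto|].
    unfold push. destruct (isid_dec x); [tauto|]. rewrite Hxy. auto.
  - destruct (mul S y w) as [q|] eqn:Hyw.
    + assert (Hsq : src S q = src S y) by (eapply src_mul; eauto).
      assert (Htx : tgt S x = src S y) by (eapply def_tgt; eauto).
      destruct (mul S x q) as [p|] eqn:Hxq.
      2:{ exfalso. assert (exists t, mul S x q = Some t) as [t Ht]
           by (apply defined_iff; congruence). congruence. }
      assert (Hzw : mul S z w = Some p) by (rewrite (mul_assoc S x y w z q Hxy Hyw); auto).
      destruct Hr as (nw & Hm & Hr').
      assert (RHS : push z (w :: r') = if isid_dec p then r' else p :: r').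
      { unfold push. destruct (isid_dec z) as [iz|nz].
        - destruct (iz w p) as [H _]. rewrite (H Hzw).
          destruct (isid_dec w); tauto.
        - rewrite Hzw. auto. }
      rewrite RHS. unfold push at 2. destruct (isid_dec y); [tauto|]. rewrite Hyw.
      destruct (isid_dec q) as [iq|nq].
      * destruct (iq x p) as [_ H]. pose proof (H Hxq) as Ep. subst p.
        destruct (isid_dec x); [tauto|].
        unfold push. destruct (isid_dec x); [tauto|].
        destruct r' as [|w' r'']; auto.
        assert (mul S x w' = None) as ->; auto.
        eapply undef_tgt; [|exact Hm].
        rewrite (def_tgt _ _ _ Hxq), id_src, <- (id_tgt q) by auto.
        eapply tgt_mul; eauto.
      * unfold push. destruct (isid_dec x); [tauto|]. rewrite Hxq. auto.
    + unfold push at 2. destruct (isid_dec y); [tauto|]. rewrite Hyw.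
      unfold push. destruct (isid_dec x); [tauto|]. rewrite Hxy.
      destruct (isid_dec z); auto.
      rewrite (undef_tgt y z w); auto. eapply tgt_mul; eauto.
Qed.

Lemma ustep_nf u w : ustep u w -> nf u = nf w.
Proof.
  intros H. destruct H; unfold nf; rewrite !fold_right_app; simpl; f_equal.
  - apply push_id; auto.
  - apply push_assoc; auto. apply nf_reduced.
Qed.

Lemma ueq_nf u w : ueq u w -> nf u = nf w.
Proof.
  intros H. induction H; auto using ustep_nf. congruence.
Qed.

Lemma ustep_ueq (u w : list S) : ustep u w -> ueq u w.
Proof. intros; apply rst_step; auto. Qed.

Lemma part13 (a : S) : (leM (eps a) [] <-> leS a (src S a)) /\
  (forall b0 rest, reduced (b0 :: rest) -> ~ right_invertible a ->
     (leM (eps a) (b0 :: rest) <-> leS a b0)).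
Proof.
  split.
  - split.
    + intros [x Hx]. apply ueq_nf in Hx. simpl in Hx. change (push a (nf x) = []) in Hx.
      pose proof (nf_reduced x) as Hr. revert Hx Hr. generalize (nf x) as r. intros r Hx Hr.
      unfold push in Hx. destruct (isid_dec a) as [ia|na].
      * exists (tgt S a). rewrite mul_t. rewrite id_src; auto.
      * destruct r as [|y r']; try discriminate.
        destruct (mul S a y) as [q|] eqn:Hay; try discriminate.
        destruct (isid_dec q) as [iq|]; try discriminate. subst r'.
        exists y. rewrite Hay. f_equal. rewrite <- (src_mul S a y q Hay). symmetry. apply id_src; auto.
    + intros [x Hx]. exists [x]. simpl.
      eapply rst_trans. apply ustep_ueq. apply (@ustep_mul S [] [] a x _ Hx).
      apply ustep_ueq. apply (@ustep_id S [] [] _ (src_is_id a)).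
  - intros b0 rest Hb nri. split.
    + intros [x Hx]. apply ueq_nf in Hx. rewrite (nf_red _ Hb) in Hx. simpl in Hx.
      change (push a (nf x) = b0 :: rest) in Hx.
      revert Hx. generalize (nf x) as r. intros r Hx.
      unfold push in Hx. destruct (isid_dec a) as [ia|na].
      * exfalso. apply nri. exists a, a. split; auto.
        rewrite <- (id_tgt a ia) at 2. rewrite mul_t. auto.
      * destruct r as [|y r'].
        { inversion Hx; subst. exists (tgt S b0). apply mul_t. }
        destruct (mul S a y) as [q|] eqn:Hay.
        { destruct (isid_dec q) as [iq|].
          - exfalso. apply nri. exists y, q. auto.
          - inversion Hx; subst. exists y; auto. }
        inversion Hx; subst. exists (tgt S b0). apply mul_t.
    + intros [x Hx]. exists (x :: rest). simpl.
      apply ustep_ueq. apply (@ustep_mul S [] rest a x b0 Hx).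
Qed.
End NF.
Arguments push {S}. Arguments nf {S}.

Section Op.
Variable S : Category.

Lemma op_src_id (x y z : S) :
  (mul S y (tgt S x) = Some z -> z = y) /\ (mul S (tgt S x) y = Some z -> z = y).
Proof. destruct (tgt_id S x y z); auto. Qed.
Lemma op_tgt_id (x y z : S) :
  (mul S y (src S x) = Some z -> z = y) /\ (mul S (src S x) y = Some z -> z = y).
Proof. destruct (src_id S x y z); auto. Qed.
Lemma op_def (x y : S) : (exists z, mul S y x = Some z) <-> src S x = tgt S y.
Proof. rewrite defined_iff. split; auto. Qed.
Lemma op_assoc (x y z xy yz : S) : mul S y x = Some xy -> mul S z y = Some yz ->
  mul S z xy = mul S yz x.
Proof. intros H1 H2. symmetry. eapply mul_assoc; eauto. Qed.

Definition opC : Category := {|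
  carrier := carrier S;
  mul := fun x y => mul S y x;
  src := tgt S; tgt := src S;
  mul_s := mul_t S; mul_t := mul_s S;
  src_id := op_src_id; tgt_id := op_tgt_id;
  defined_iff := op_def;
  src_mul := fun x y z H => tgt_mul S y x z H;
  tgt_mul := fun x y z H => src_mul S y x z H;
  mul_assoc := op_assoc |}.

Lemma is_id_op (e : S) : @is_id opC e <-> is_id e.
Proof. unfold is_id; simpl. split; intros H x y; destruct (H x y); auto. Qed.

Lemma ustep_op (u w : list S) : ustep u w -> @ustep opC (rev u) (rev w).
Proof.
  intros H. destruct H.
  - rewrite !rev_app_distr. simpl. rewrite <- app_assoc. simpl.
    apply (@ustep_id opC). apply is_id_op; auto.
  - rewrite !rev_app_distr. simpl. rewrite <- !app_assoc. simpl.
    apply (@ustep_mul opC). simpl. auto.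
Qed.

Lemma ustep_unop (u w : list S) : @ustep opC u w -> ustep (rev u) (rev w).
Proof.
  intros H. destruct H.
  - rewrite !rev_app_distr. simpl. rewrite <- app_assoc. simpl.
    apply (@ustep_id S). apply is_id_op; auto.
  - rewrite !rev_app_distr. simpl. rewrite <- !app_assoc. simpl.
    apply (@ustep_mul S). simpl in H. auto.
Qed.

Lemma ueq_op (u w : list S) : ueq u w -> @ueq opC (rev u) (rev w).
Proof.
  intros H. induction H.
  - apply rst_step. apply ustep_op; auto.
  - apply rst_refl.
  - apply rst_sym; auto.
  - eapply rst_trans; eauto.
Qed.

Lemma ueq_unop (u w : list S) : @ueq opC u w -> ueq (rev u) (rev w).
Proof.
  intros H. induction H.
  - apply rst_step. apply ustep_unop; auto.
  - apply rst_refl.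
  - apply rst_sym; auto.
  - eapply rst_trans; eauto.
Qed.

Lemma reduced_rev_aux (r : list S) : forall (x : S) (acc : list S),
  reduced (x :: r) -> @reduced opC (x :: acc) -> @reduced opC (rev_append r (x :: acc)).
Proof.
  induction r as [|y r IH]; intros x acc H1 H2; simpl; auto.
  apply IH.
  - destruct H1 as (_ & _ & H); auto.
  - destruct H1 as (_ & Hm & H). destruct H as (ny & _ & _).
    simpl. split; [rewrite is_id_op; auto|]. split; auto.
Qed.

Lemma reduced_rev (x : S) (r : list S) : reduced (x :: r) -> @reduced opC (rev (x :: r)).
Proof.
  intros H. rewrite rev_alt. simpl. apply reduced_rev_aux; auto.
  simpl. split; auto. rewrite is_id_op. destruct H; auto.
Qed.
End Op.

Theorem lemma5p3 (S : Category) (a : S) :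
  (leM (eps a) [] <-> leS a (src S a)) /\
  (leM_tilde (eps a) [] <-> leS_tilde a (tgt S a)) /\
  (forall (b0 : S) (rest : list S), reduced (b0 :: rest) ->
     (~ right_invertible a -> (leM (eps a) (b0 :: rest) <-> leS a (nabla0 b0 rest))) /\
     (~ left_invertible a ->
        (leM_tilde (eps a) (b0 :: rest) <-> leS_tilde a (nabla1 b0 rest)))).
Proof.
  destruct (part13 S a) as [P1 P3].
  destruct (part13 (opC S) a) as [Q1 Q3].
  assert (TR : forall w, leM_tilde (eps a) w <-> @leM (opC S) (eps a) (rev w)).
  { intros w. split.
    - intros [x Hx]. exists (rev x). apply ueq_op in Hx.
      rewrite rev_app_distr in Hx. exact Hx.
    - intros [x Hx]. exists (rev x). apply ueq_unop in Hx.
      rewrite rev_app_distr, rev_involutive in Hx. exact Hx. }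
  split; [exact P1|]. split.
  { rewrite TR. exact Q1. }
  intros b0 rest Hb. split.
  - intros nri. apply P3; auto.
  - intros nli. rewrite TR.
    assert (E : rev (b0 :: rest) = last rest b0 :: rev (removelast (b0 :: rest))).
    { rewrite (app_removelast_last b0 (l := b0 :: rest)) at 1 by discriminate.
      rewrite rev_app_distr. simpl. f_equal. destruct rest; auto. }
    pose proof (reduced_rev S b0 rest Hb) as Hr. rewrite E in Hr. rewrite E.
    apply Q3; auto.
    intros (x & e & H1 & H2). apply nli. exists x, e. split; auto.
    apply is_id_op; auto.
Qed.
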